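(* Let $G$ be a graph with $\mathcal{P}(G)=\mathcal{T}(G)$. Then $G$ contains no induced subgraph that is a 2-plex on 4 vertices, and no induced cycle (hole) of length at least 4 whose length is not a multiple of 3.
   Context: All graphs are simple and connected. A 2-plex is a vertex set $K$ such that $G[K]$ has minimum degree at least $|K|-2$. A hole is an induced cycle of length at least 4. A co-2-plex is a vertex set inducing a subgraph of maximum degree at most 1. $\mathcal{P}(G)=\mathrm{conv}\{\chi^S : S\text{ co-2-plex of } G\}$. $\mathcal{T}(G)$ is the polytope of $x\in\mathbb{R}^V$ satisfying $0\le x\le 1$ and $x(W)+(|W|-1)x_w\le|W|$ for all $w\in V$ and $W\subseteq N(w)$, where $x(A)=\sum_{a\in A}x_a$. *)

(* Defs.v *)
From mathcomp Require Import all_boot all_order all_algebra.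
From mathcomp Require Import reals.
Set Implicit Arguments. Unset Strict Implicit. Unset Printing Implicit Defensive.
Import Order.TTheory GRing.Theory Num.Theory.
Local Open Scope ring_scope.

Section Defs.
Variable T : finType.
Variable e : rel T.

Definition simple_graph : Prop := symmetric e /\ irreflexive e.
Definition connected_graph : Prop := forall x y : T, connect e x y.

Definition nbr (w : T) : {set T} := [set u | e w u].

Definition two_plex (K : {set T}) : Prop :=
  forall v, v \in K -> (#|K| - 2 <= #|[set u in K | e v u]|)%N.

Definition co2plex (S : {set T}) : bool :=
  [forall v in S, #|[set u in S | e v u]| <= 1]%N.

Definition hole (c : seq T) : Prop :=
  match c with
  | [::] => False
  | x0 :: _ =>
    [/\ uniq c, (4 <= size c)%N &
        forall i j, (i < size c)%N -> (j < size c)%N ->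
          e (nth x0 c i) (nth x0 c j) =
          (j == (i.+1 %% size c)%N) || (i == (j.+1 %% size c)%N)]
  end.

Variable R : realType.

Definition chi (S : {set T}) : T -> R := fun v => if v \in S then 1 else 0.

Definition in_P (x : T -> R) : Prop :=
  exists lam : {set T} -> R,
    [/\ forall S, 0 <= lam S,
        \sum_(S : {set T} | co2plex S) lam S = 1 &
        forall v, x v = \sum_(S : {set T} | co2plex S) lam S * chi S v].

Definition in_T (x : T -> R) : Prop :=
  (forall v, 0 <= x v <= 1) /\
  forall (w : T) (W : {set T}), W \subset nbr w ->
    \sum_(a in W) x a + (#|W|%:R - 1) * x w <= #|W|%:R.

End Defs.

(* Main.v *)
Require Import Defs.
From mathcomp Require Import all_boot all_order all_algebra.
From mathcomp Require Import reals.
From mathcomp Require Import zify lra.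
Set Implicit Arguments. Unset Strict Implicit. Unset Printing Implicit Defensive.
Import Order.TTheory GRing.Theory Num.Theory.
Local Open Scope ring_scope.

Section Aux.
Variable T : finType.
Variable e : rel T.
Variable R : realType.

Lemma card_sep (K : {set T}) (P : pred T) :
  #|[set u in K | P u]| = (\sum_(u in K) (P u : nat))%N.
Proof.
rewrite -sum1_card big_mkcond [RHS]big_mkcond /=; apply: eq_bigr => u _.
by rewrite inE; case: (u \in K); case: (P u).
Qed.

Lemma sum_ind (A W : {set T}) (t : R) :
  \sum_(a in W) (if a \in A then t else 0) = t * (#|[set a in W | a \in A]|)%:R.
Proof.
rewrite card_sep natr_sum mulr_sumr; apply: eq_bigr => a _.
by case: (a \in A); rewrite /= ?mulr1 ?mulr0.
Qed.

Lemma P_bound (x : T -> R) (A : {set T}) (b : R) :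
  in_P e x -> (forall S, co2plex e S -> (#|[set v in A | v \in S]|%:R <= b)) ->
  \sum_(v in A) x v <= b.
Proof.
move=> [lam [l0 l1 lx]] hb.
have -> : \sum_(v in A) x v =
   \sum_(S | co2plex e S) lam S * (#|[set v in A | v \in S]|)%:R.
  rewrite (eq_bigr (fun v => \sum_(S | co2plex e S) lam S * chi R S v)); last by move=> v _; exact: lx.
  rewrite exchange_big /=; apply: eq_bigr => S _.
  by rewrite -mulr_sumr /chi sum_ind mul1r.
apply: (@le_trans _ _ (\sum_(S | co2plex e S) lam S * b)).
  by apply: ler_sum => S hS; apply: ler_wpM2l; [exact: l0 | exact: hb].
by rewrite -mulr_suml l1 mul1r.
Qed.

Lemma T_check (A : {set T}) (t : R) (D : nat) :
  0 <= t <= 1 ->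
  (forall w, w \in A -> (#|[set u in A | e w u]| <= D)%N) ->
  (forall m n : nat, (m <= n)%N -> (m <= D)%N -> t * m%:R + (n%:R - 1) * t <= n%:R) ->
  in_T e (fun v => if v \in A then t else 0).
Proof.
move=> /andP[t0 t1] hD hnum; split.
  by move=> v; case: (v \in A); rewrite /= ?t0 ?t1 ?lexx ?ler01.
move=> w W sW; rewrite sum_ind.
set m := #|_|.
have mn : (m <= #|W|)%N.
  by apply: subset_leq_card; apply/subsetP => u; rewrite inE => /andP[].
case wA: (w \in A).
  apply: hnum => //; apply: leq_trans (hD w wA).
  apply: subset_leq_card; apply/subsetP => u; rewrite !inE => /andP[uW ->].
  by move/subsetP: sW => /(_ u uW); rewrite inE => ->.
rewrite mulr0 addr0.
have : m%:R <= #|W|%:R :> R by rewrite ler_nat.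
have : 0 <= m%:R :> R by [].
nra.
Qed.

Lemma sum3 (a b c : T) (P : pred T) : a != b -> a != c -> b != c ->
  (\sum_(u in a |: (b |: [set c])) (P u : nat) = P a + P b + P c)%N.
Proof.
move=> ab ac bc.
rewrite big_setU1 /=; last by rewrite !inE negb_or ab ac.
rewrite big_setU1 /=; last by rewrite !inE bc.
by rewrite big_set1 addnA.
Qed.

Lemma sum4 (a b c d : T) (P : pred T) : a != b -> a != c -> b != c ->
  a != d -> b != d -> c != d ->
  (\sum_(u in a |: (b |: (c |: [set d]))) (P u : nat) = P a + P b + P c + P d)%N.
Proof.
move=> ab ac bc ad bd cd.
rewrite big_setU1 /=; last by rewrite !inE !negb_or ab ac ad.
rewrite big_setU1 /=; last by rewrite !inE negb_or bc bd.
rewrite big_setU1 /=; last by rewrite !inE cd.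
by rewrite big_set1 !addnA.
Qed.

Lemma twoplex_bound (K S : {set T}) : simple_graph e -> #|K| = 4%N ->
  two_plex e K -> co2plex e S -> (#|[set v in K | v \in S]| <= 2)%N.
Proof.
move=> [esym eirr] K4 hK /forall_inP hS.
rewrite leqNgt; apply/negP => /card_gt2P [a [b [c [[aB bB cB] [ab bc ca]]]]].
move: aB bB cB; rewrite !inE => /andP[aK aS] /andP[bK bS] /andP[cK cS].
have ac : a != c by rewrite eq_sym.
have [d dK dn] : exists2 d, d \in K & d \notin a |: (b |: [set c]).
  apply/subsetPn; apply/negP => sub; move: (subset_leq_card sub).
  rewrite K4 !cardsU1 cards1; case: (a \notin _); case: (b \notin _) => //.
move: dn; rewrite !inE !negb_or => /and3P[da db dc].
have ad : a != d by rewrite eq_sym. have bd : b != d by rewrite eq_sym.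
have cd : c != d by rewrite eq_sym.
have eK : K = a |: (b |: (c |: [set d])).
  apply/eqP; rewrite eq_sym eqEcard; apply/andP; split.
    by apply/subsetP => u; rewrite !inE => /or4P[] /eqP ->.
  by rewrite K4 !cardsU1 cards1 !inE !negb_or ab ac ad bc bd cd.
have deg v : v \in K -> (2 <= e v a + e v b + e v c + e v d)%N.
  move=> vK; have := hK v vK; rewrite K4 card_sep eK sum4 //.
have co v : v \in S -> (e v a + e v b + e v c <= 1)%N.
  move=> vS; have := hS v vS; apply: leq_trans.
  rewrite -sum3 // -card_sep; apply: subset_leq_card; apply/subsetP => u.
  rewrite !inE => /andP[/or3P[] /eqP -> ->]; rewrite ?aS ?bS ?cS //.
have := deg a aK; have := deg b bK; have := deg c cK.
have := co a aS; have := co b bS; have := co c cS.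
rewrite (esym b a) (esym c a) (esym c b) !eirr.
by case: (e a b); case: (e a c); case: (e a d); case: (e b c); case: (e b d); case: (e c d).
Qed.
End Aux.
Lemma a1 i j k : (j < k)%N -> i = (j.+1 %% k)%N -> j = ((i + k.-1) %% k)%N.
Proof.
move=> jk ->; case: (ltnP j.+1 k) => h.
  rewrite (modn_small h) (_ : (j.+1 + k.-1 = j + k)%N); last by lia.
  by rewrite modnDr modn_small.
have hk : j.+1 = k by lia.
by rewrite hk modnn add0n modn_small; lia.
Qed.
Lemma a2 i k : (4 <= k)%N -> (i < k)%N -> i != (((i.+1 %% k).+1) %% k)%N.
Proof.
move=> k4 ik; case: (ltnP i.+1 k) => h.
  rewrite (modn_small h); case: (ltnP i.+2 k) => h2.
    by rewrite (modn_small h2); lia.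
  have -> : i.+2 = k by lia.
  by rewrite modnn; lia.
have -> : i.+1 = k by lia.
by rewrite modnn modn_small; lia.
Qed.

Section Aux2. Variable T : finType. Variable e : rel T.
Lemma card_pred (I : finType) (P : pred I) :
  #|[set i | P i]| = (\sum_i (P i : nat))%N.
Proof.
rewrite -sum1_card big_mkcond [RHS]big_mkcond /=; apply: eq_bigr => u _.
by rewrite inE; case: (P u).
Qed.

Lemma hole_deg (x0 : T) (c : seq T) w : hole e (x0 :: c) -> w \in x0 :: c ->
  (#|[set u in [set v | v \in x0 :: c] | e w u]| <= 2)%N.
Proof.
move=> [hu h4 hc] wc.
set s := x0 :: c in hu h4 hc wc *; set k := size s.
have k0 : (0 < k)%N by [].
set i := index w s.
have ik : (i < k)%N by rewrite index_mem.
have wi : w = nth x0 s i by rewrite nth_index.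
apply: (@leq_trans #|[set nth x0 s (i.+1 %% k); nth x0 s ((i + k.-1) %% k)]|); last first.
  by rewrite cards2; case: (_ != _).
apply: subset_leq_card; apply/subsetP => u; rewrite !inE => /andP[uc].
set j := index u s.
have jk : (j < k)%N by rewrite index_mem.
have uj : u = nth x0 s j by rewrite nth_index.
rewrite wi uj hc // => /orP[/eqP-> | /eqP h]; first by rewrite eqxx.
by rewrite -(a1 jk h) eqxx orbT.
Qed.

Lemma hole_bound (x0 : T) (c : seq T) (S : {set T}) : hole e (x0 :: c) ->
  co2plex e S ->
  (3 * #|[set v in [set v | v \in x0 :: c] | v \in S]| <= 2 * size (x0 :: c))%N.
Proof.
move=> [hu h4 hc] /forall_inP hS.
set s := x0 :: c in hu h4 hc *; set k := size s.
pose f (i : 'I_k) := nth x0 s i.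
have finj : injective f.
  by move=> i j /eqP; rewrite /f nth_uniq // => /eqP/val_inj.
have -> : [set v in [set v | v \in s] | v \in S] = f @: [set i | f i \in S].
  apply/setP => v; rewrite !in_set; apply/idP/imsetP.
    move=> /andP[vs vS].
    have vk : (index v s < k)%N by rewrite index_mem.
    by exists (Ordinal vk); rewrite ?in_set /f /= nth_index.
  move=> [i]; rewrite in_set => fiS ->; rewrite fiS andbT.
  by rewrite /f mem_nth.
rewrite card_imset // card_pred.
have key : forall i : 'I_k,
  ((f i \in S) + (f (ordS i) \in S) + (f (ordS (ordS i)) \in S) <= 2)%N.
  move=> i; case h0: (f i \in S); case h1: (f (ordS i) \in S);
    case h2: (f (ordS (ordS i)) \in S) => //.
  have := hS _ h1; apply: contraTT => _; rewrite -ltnNge.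
  have neq : f i != f (ordS (ordS i)).
    rewrite (inj_eq finj); apply/eqP => /(congr1 val) /=; apply/eqP.
    by apply: a2.
  apply: (@leq_trans #|[set f i; f (ordS (ordS i))]|).
    by rewrite cards2 neq.
  apply: subset_leq_card; apply/subsetP => w; rewrite !inE => /orP[] /eqP ->;
    rewrite ?h0 ?h2 /= /f hc //; apply/orP; by [right | left].
have e1 : (\sum_i (f i \in S) = \sum_i (f (ordS i) \in S))%N.
  by apply: (reindex_inj (@ordS_inj k)).
have e2 : (\sum_i (f (ordS i) \in S) = \sum_i (f (ordS (ordS i)) \in S))%N.
  by apply: (reindex_inj (@ordS_inj k)).
have : (\sum_i ((f i \in S) + (f (ordS i) \in S) + (f (ordS (ordS i)) \in S)) <= \sum_(i : 'I_k) 2)%N.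
  by apply: leq_sum => i _; exact: key.
rewrite !big_split /= sum_nat_const card_ord -e2 -e1.
move=> H. have -> : forall X, (3 * X = X + X + X)%N by move=> X; lia.
by rewrite mulnC; exact: H.
Qed.
End Aux2.

Theorem mainTheorem13 (R : realType) (T : finType) (e : rel T) :
  simple_graph e -> connected_graph e ->
  (forall x : T -> R, in_P e x <-> in_T e x) ->
  (forall K : {set T}, #|K| = 4%N -> ~ two_plex e K) /\
  (forall c : seq T, hole e c -> (3 %| size c)%N).
Proof.
move=> sg _ PT; have [esym eirr] := sg; split.
  move=> K K4 hK.
  pose x := fun v => if v \in K then (3/5 : R) else 0.
  have xT : in_T e x.
    apply: (@T_check _ _ _ _ _ 3).
    - by apply/andP; split; lra.
    - move=> w wK; apply: (@leq_trans #|K :\ w|); last first.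
        by move: K4; rewrite (cardsD1 w K) wK; lia.
      apply: subset_leq_card; apply/subsetP => u; rewrite !inE => /andP[uK ewu].
      rewrite uK andbT; apply/eqP => uw; by rewrite uw eirr in ewu.
    - move=> m n mn m3.
      have h : (3 * m + 3 * n <= 5 * n + 3)%N by lia.
      move: h; rewrite -(ler_nat R) !natrD ?natrM => h; lra.
  have xP := proj2 (PT x) xT.
  have := @P_bound _ e R x K 2 xP.
  have -> : \sum_(v in K) x v = 3/5 * 4.
    rewrite /x sum_ind (_ : [set a in K | a \in K] = K); first by rewrite K4.
    by apply/setP => v; rewrite inE andbb.
  have : (forall S, co2plex e S -> (#|[set v in K | v \in S]|%:R <= 2 :> R)).
    by move=> S hS; rewrite ler_nat; exact: (twoplex_bound sg K4 hK hS).
  move=> h /(_ h); lra.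
case=> [|x0 c] hc; first by [].
case: (boolP (3 %| size (x0 :: c))%N) => // nd; exfalso.
set k := size (x0 :: c).
pose A := [set v | v \in x0 :: c].
pose x := fun v => if v \in A then (2/3 : R) else 0.
have xT : in_T e x.
  apply: (@T_check _ _ _ _ _ 2).
  - by apply/andP; split; lra.
  - by move=> w; rewrite inE => wc; apply: hole_deg.
  - move=> m n mn m2.
    have h : (2 * m + 2 * n <= 3 * n + 2)%N by lia.
    move: h; rewrite -(ler_nat R) !natrD ?natrM => h; lra.
have xP := proj2 (PT x) xT.
have := @P_bound _ e R x A (((2 * k)%:R - 1) / 3) xP.
have -> : \sum_(v in A) x v = 2/3 * k%:R.
  rewrite /x sum_ind (_ : [set a in A | a \in A] = A).
    by rewrite cardsE; move: hc => [hu _ _]; rewrite (card_uniqP hu).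
  by apply/setP => v; rewrite inE andbb.
have : (forall S, co2plex e S -> (#|[set v in A | v \in S]|%:R <= ((2 * k)%:R - 1) / 3 :> R)).
  move=> S hS; have := hole_bound hc hS; rewrite -/k => hb.
  have h : (3 * #|[set v in A | v \in S]| + 1 <= 2 * k)%N by move: hb nd; rewrite /A /k; lia.
  move: h; rewrite -(ler_nat R) !natrD ?natrM => h; lra.
move=> h /(_ h); rewrite ?natrM; lra.
Qed.
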